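(* Let $X$ be a continuum, let $n\geq 2$ be an integer, and let $f:X\to X$ be a map. Consider the statements: (1) $f$ is sensitive; (2) $F_n(f)$ is sensitive; (3) $SF_n(f)$ is sensitive. Then (3) implies (2), and (2) implies (1).
   Context: A continuum is a nonempty compact connected metric space $(X,d)$. For $n\in\mathbb{N}$, $F_n(X)$ is the set of nonempty subsets of $X$ with at most $n$ points, with the Hausdorff metric $d_H$; $F_1(X)=\{\{x\}:x\in X\}$. For $f:X\to X$, $F_n(f):F_n(X)\to F_n(X)$ is $F_n(f)(A)=f(A)$. For $n\geq 2$, $SF_n(X)$ is the quotient space $F_n(X)/F_1(X)$ (collapsing $F_1(X)$ to a point), $q:F_n(X)\to SF_n(X)$ the quotient map and $F_X=q(F_1(X))$. The induced map $SF_n(f):SF_n(X)\to SF_n(X)$ is $SF_n(f)(\chi)=q(F_n(f)(q^{-1}(\chi)))$ if $\chi\neq F_X$ and $SF_n(f)(F_X)=F_X$. $SF_n(X)$ carries the metric $\rho(\chi_1,\chi_2)=\mathcal{H}^2(F_1(X)\cup q^{-1}(\chi_1),F_1(X)\cup q^{-1}(\chi_2))$, where $\mathcal{H}^2$ is the Hausdorff metric on closed subsets of $F_n(X)$ induced by $d_H$. A map $g$ on a metric space $(Z,D)$ is sensitive if there is $\delta>0$ such that for every nonempty open $U\subseteq Z$ there exist $x,y\in U$ and $m\in\mathbb{N}$ with $D(g^m(x),g^m(y))>\delta$ (with $D=d,d_H,\rho$ for $f,F_n(f),SF_n(f)$ respectively). *)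

(* Defs.v *)
From HB Require Import structures.
From mathcomp Require Import all_boot all_order all_algebra.
From mathcomp Require Import boolp classical_sets reals.
From Stdlib Require List.
Set Implicit Arguments. Unset Strict Implicit. Unset Printing Implicit Defensive.
Import Order.TTheory GRing.Theory Num.Theory.
Local Open Scope classical_set_scope.
Local Open Scope ring_scope.

Section Defs.
Context {R : realType}.

Definition is_metric {X : Type} (d : X -> X -> R) : Prop :=
  [/\ (forall x y, 0 <= d x y),
      (forall x y, d x y = 0 <-> x = y),
      (forall x y, d x y = d y x) &
      (forall x y z, d x z <= d x y + d y z)].

Definition metric_open {Z : Type} (D : Z -> Z -> R) (S U : set Z) : Prop :=
  U `<=` S /\
  forall z, U z -> exists2 r : R, 0 < r & forall w, S w -> D z w < r -> U w.

Definition metric_compact {X : Type} (d : X -> X -> R) : Prop :=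
  forall (I : Type) (U : I -> set X),
    (forall i, metric_open d setT (U i)) ->
    (forall x, exists i, U i x) ->
    exists s : list I, forall x, exists2 i, List.In i s & U i x.

Definition metric_connected {X : Type} (d : X -> X -> R) : Prop :=
  ~ exists U V : set X,
      [/\ metric_open d setT U, metric_open d setT V,
          U !=set0, V !=set0 &
          (U `&` V = set0 /\ U `|` V = setT)].

Definition continuum {X : Type} (d : X -> X -> R) : Prop :=
  [/\ is_metric d, (exists x : X, True), metric_compact d & metric_connected d].

Definition metric_continuous {X : Type} (d : X -> X -> R) (f : X -> X) : Prop :=
  forall x (e : R), 0 < e -> exists2 del : R, 0 < del &
    forall y, d x y < del -> d (f x) (f y) < e.

Definition hausdorff {Z : Type} (D : Z -> Z -> R) (A B : set Z) : R :=
  Num.max (sup [set inf [set D a b | b in B] | a in A])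
          (sup [set inf [set D a b | a in A] | b in B]).

Definition Fn {X : Type} (n : nat) : set (set X) :=
  [set A | exists s : list X,
     [/\ s <> nil, (length s <= n)%N & forall x, A x <-> List.In x s]].

Definition dH {X : Type} (d : X -> X -> R) : set X -> set X -> R := hausdorff d.

Definition Fn_map {X : Type} (f : X -> X) : set X -> set X := fun A => f @` A.

(** SF_n(X): a point chi is represented by its fibre q^{-1}(chi) ⊆ F_n(X):
    either F_1(X) (the point F_X) or a singleton {A} with A in F_n(X) \ F_1(X). *)
Definition SFn {X : Type} (n : nat) : set (set (set X)) :=
  [set chi | chi = Fn 1 \/ exists A, [/\ Fn n A, ~ Fn 1 A & chi = [set A]]].

Definition qmap {X : Type} (A : set X) : set (set X) :=
  if pselect (Fn 1 A) then Fn 1 else [set A].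

Definition SFn_map {X : Type} (f : X -> X) (chi : set (set X)) : set (set X) :=
  if pselect (chi = Fn 1) then Fn 1
  else [set B | exists A, chi A /\ qmap (Fn_map f A) B].

(** rho(chi1, chi2) = H^2(F_1(X) ∪ q^{-1}(chi1), F_1(X) ∪ q^{-1}(chi2)) *)
Definition rho {X : Type} (d : X -> X -> R) (chi1 chi2 : set (set X)) : R :=
  hausdorff (dH d) (Fn 1 `|` chi1) (Fn 1 `|` chi2).

Definition sensitive {Z : Type} (S : set Z) (D : Z -> Z -> R) (g : Z -> Z) : Prop :=
  exists2 del : R, 0 < del &
    forall U : set Z, metric_open D S U -> U !=set0 ->
      exists x y (m : nat), [/\ U x, U y, (0 < m)%N & del < D (iter m g x) (iter m g y)].

End Defs.

(* Main.v *)
Require Import Defs.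
From HB Require Import structures.
From mathcomp Require Import all_boot all_order all_algebra.
From mathcomp Require Import boolp classical_sets reals.
From Stdlib Require List.
Set Implicit Arguments. Unset Strict Implicit. Unset Printing Implicit Defensive.
Import Order.TTheory GRing.Theory Num.Theory.
Local Open Scope classical_set_scope.
Local Open Scope ring_scope.

Section Gen.
Variable R : realType.

Lemma supge0 (E : set R) : (forall e, E e -> 0 <= e) -> 0 <= sup E.
Proof.
move=> H; case: (pselect (has_sup E)) => hs; last by rewrite sup_out.
case: (hs) => -[e Ee] _; apply: le_trans (H _ Ee) _.
by apply: ub_le_sup => //; case: hs.
Qed.

Lemma suple (E : set R) M : (forall e, E e -> e <= M) -> 0 <= M -> sup E <= M.
Proof.
move=> H M0; case: (pselect (E !=set0)) => ne; first by apply: ge_sup.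
rewrite sup_out //; by case.
Qed.

Lemma infge0 (E : set R) : (forall e, E e -> 0 <= e) -> 0 <= inf E.
Proof.
move=> H; case: (pselect (has_inf E)) => hs; last by rewrite inf_out.
by apply: lb_le_inf; [case: hs|].
Qed.

Lemma infle (E : set R) e : (forall e, E e -> 0 <= e) -> E e -> inf E <= e.
Proof. by move=> H Ee; apply: ge_inf => //; exists 0. Qed.

Variable Z : Type.
Variable D : Z -> Z -> R.
Hypothesis D0 : forall x y, 0 <= D x y.

Lemma H_ge0 A B : 0 <= hausdorff D A B.
Proof.
rewrite /hausdorff le_max; apply/orP; left; apply: supge0 => _ [a Aa <-].
by apply: infge0 => _ [b Bb <-].
Qed.

Lemma H_le A B e : 0 <= e ->
  (forall a, A a -> exists2 b, B b & D a b <= e) ->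
  (forall b, B b -> exists2 a, A a & D a b <= e) ->
  hausdorff D A B <= e.
Proof.
move=> e0 HA HB; rewrite /hausdorff ge_max; apply/andP; split;
  apply: suple => // _ [x Ax <-].
- case: (HA _ Ax) => b Bb le; apply: le_trans le.
  by apply: infle; [move=> _ [? _ <-]|exists b].
- case: (HB _ Ax) => a Aa le; apply: le_trans le.
  by apply: infle; [move=> _ [? _ <-]|exists a].
Qed.

Lemma H_lb1 A B a M : (forall a', A a' -> inf [set D a' b | b in B] <= M) ->
  A a -> inf [set D a b | b in B] <= hausdorff D A B.
Proof.
move=> HM Aa; rewrite /hausdorff le_max; apply/orP; left.
apply: ub_le_sup; last by exists a.
by exists M => _ [a' Aa' <-]; apply: HM.
Qed.

Lemma H_lb2 A B b M : (forall b', B b' -> inf [set D a b' | a in A] <= M) ->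
  B b -> inf [set D a b | a in A] <= hausdorff D A B.
Proof.
move=> HM Bb; rewrite /hausdorff le_max; apply/orP; right.
apply: ub_le_sup; last by exists b.
by exists M => _ [b' Bb' <-]; apply: HM.
Qed.

Lemma H_self A : (forall a, D a a <= 0) -> hausdorff D A A <= 0.
Proof.
move=> Daa; apply: H_le => // [a Aa|b Bb]; [exists a|exists b] => //.
Qed.

End Gen.

Lemma H_gt (R : realType) (Z : Type) (D : Z -> Z -> R) (D0 : forall x y, 0 <= D x y) A B del :
  A !=set0 -> B !=set0 -> del < hausdorff D A B ->
  exists a b, [/\ A a, B b & del < D a b].
Proof.
move=> [a0 Aa0] [b0 Bb0]; rewrite /hausdorff lt_max => /orP[].
- case/sup_gt; first by exists (inf [set D a0 b | b in B]), a0.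
  move=> _ [a Aa <-] lt; exists a, b0; split => //.
  by apply: lt_le_trans lt _; apply: infle => [_ [? _ <-]|]//; exists b0.
- case/sup_gt; first by exists (inf [set D a b0 | a in A]), b0.
  move=> _ [b Bb <-] lt; exists a0, b; split => //.
  by apply: lt_le_trans lt _; apply: infle => [_ [? _ <-]|]//; exists a0.
Qed.

Section X.
Variables (R : realType) (X : Type) (d : X -> X -> R).
Hypothesis Hm : is_metric d.

Lemma d0 x y : 0 <= d x y. Proof. by case: Hm. Qed.
Lemma dxx x : d x x = 0. Proof. by case: Hm => _ H _ _; exact: (proj2 (H x x)). Qed.
Lemma dsym x y : d x y = d y x. Proof. by case: Hm. Qed.
Lemma dtri x y z : d x z <= d x y + d y z. Proof. by case: Hm. Qed.
Lemma deq0 x y : d x y = 0 -> x = y. Proof. by case: Hm => _ H _ _; exact: (proj1 (H x y)). Qed.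

Lemma dH0 (A B : set X) : 0 <= dH d A B. Proof. exact: H_ge0 d0 _ _. Qed.
Lemma dHself (A : set X) : dH d A A <= 0.
Proof. by apply: H_self d0 _ _ => a; rewrite dxx. Qed.

Lemma listbound (T : Type) (g : T -> R) (s : list T) :
  exists M, forall x, List.In x s -> g x <= M.
Proof.
elim: s => [|a s [M HM]]; first by exists 0.
exists (Num.max (g a) M) => x /= [<-|/HM]; rewrite le_max ?lexx //.
by move=> ->; rewrite orbT.
Qed.

Lemma bound2 (sA sB : list X) :
  exists M, forall a b, List.In a sA -> List.In b sB -> d a b <= M.
Proof.
elim: sA => [|a sA [M HM]]; first by exists 0.
have [M' HM'] := listbound (fun b => d a b) sB.
exists (Num.max M' M) => x b /= [<-|xs] bs; rewrite le_max.
  by rewrite HM'.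
by rewrite HM ?orbT.
Qed.

Lemma Fn_ne n (A : set X) : Fn n A -> A !=set0.
Proof. by case=> -[|x s] [] // _ _ H; exists x; apply/H; left. Qed.

Lemma Fn_bound n m (A B : set X) : Fn n A -> Fn m B ->
  exists M, forall a b, A a -> B b -> d a b <= M.
Proof.
case=> sA [_ _ HA] [sB [_ _ HB]]; have [M HM] := bound2 sA sB.
by exists M => a b /HA ? /HB ?; apply: HM.
Qed.

Lemma lbF1 n m (A B : set X) a : Fn n A -> Fn m B -> A a ->
  inf [set d a b | b in B] <= dH d A B.
Proof.
move=> FA FB Aa; have [M HM] := Fn_bound FA FB.
have [b0 Bb0] := Fn_ne FB.
apply: (H_lb1 (M := M)) => // a' Aa'; apply: le_trans (HM _ _ Aa' Bb0).
by apply: infle => [_ [? _ <-]|]; [exact: d0| exists b0].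
Qed.

Lemma lbF2 n m (A B : set X) b : Fn n A -> Fn m B -> B b ->
  inf [set d a b | a in A] <= dH d A B.
Proof.
move=> FA FB Bb; have [M HM] := Fn_bound FA FB.
have [a0 Aa0] := Fn_ne FA.
apply: (H_lb2 (M := M)) => // b' Bb'; apply: le_trans (HM _ _ Aa0 Bb').
by apply: infle => [_ [? _ <-]|]; [exact: d0| exists a0].
Qed.

Lemma dH_small1 n m (A B : set X) a r : Fn n A -> Fn m B -> A a -> dH d A B < r ->
  exists2 b, B b & d a b < r.
Proof.
move=> FA FB Aa lt; have := le_lt_trans (lbF1 FA FB Aa) lt.
have [b0 Bb0] := Fn_ne FB.
case/inf_lt; first by exists (d a b0), b0.
by move=> _ [b Bb <-] ?; exists b.
Qed.

Lemma dH_small2 n m (A B : set X) b r : Fn n A -> Fn m B -> B b -> dH d A B < r ->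
  exists2 a, A a & d a b < r.
Proof.
move=> FA FB Bb lt; have := le_lt_trans (lbF2 FA FB Bb) lt.
have [a0 Aa0] := Fn_ne FA.
case/inf_lt; first by exists (d a0 b), a0.
by move=> _ [a Aa <-] ?; exists a.
Qed.

End X.

Lemma iterFn (X : Type) (f : X -> X) m (A : set X) :
  iter m (Fn_map f) A = (iter m f) @` A.
Proof.
elim: m => [|m IH] /=.
  by apply/seteqP; split => y; [move=> Ay; exists y|case=> z Az <-].
rewrite IH /Fn_map; apply/seteqP; split => y.
  by case=> _ [z Az <-] <-; exists z.
by case=> z Az <-; exists (iter m f z) => //; exists z.
Qed.

Lemma Fn1_img (X : Type) (f : X -> X) (A : set X) : Fn 1 A -> Fn 1 (f @` A).
Proof.
case=> -[|x [|y s]] [] //= _ _ HA; exists [:: f x]; split => //= z; split.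
  by case=> w /HA [<-|[]] <-; left.
by case=> [<-|[]]; exists x => //; apply/HA; left.
Qed.

Lemma qmapE1 (X : Type) (A : set X) : Fn 1 A -> qmap A = Fn 1.
Proof. by rewrite /qmap; case: pselect. Qed.
Lemma qmapE2 (X : Type) (A : set X) : ~ Fn 1 A -> qmap A = [set A].
Proof. by rewrite /qmap; case: pselect. Qed.
Lemma SFE1 (X : Type) (f : X -> X) : SFn_map f (Fn 1) = Fn 1.
Proof. by rewrite /SFn_map; case: pselect. Qed.
Lemma SFE2 (X : Type) (f : X -> X) chi : chi <> Fn 1 ->
  SFn_map f chi = [set B | exists A, chi A /\ qmap (Fn_map f A) B].
Proof. by rewrite /SFn_map; case: pselect. Qed.

Lemma SFq (X : Type) (f : X -> X) (A : set X) :
  SFn_map f (qmap A) = qmap (Fn_map f A).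
Proof.
case: (pselect (Fn 1 A)) => FA.
  by rewrite qmapE1 // SFE1 qmapE1 //; exact: Fn1_img.
rewrite qmapE2 // SFE2; last by move=> E; apply: FA; rewrite -E.
apply/seteqP; split => B.
  by case=> A' [-> ].
by move=> HB; exists A.
Qed.

Lemma iterSF (X : Type) (f : X -> X) m (A : set X) :
  iter m (SFn_map f) (qmap A) = qmap (iter m (Fn_map f) A).
Proof. by elim: m => [|m IH] //=; rewrite IH SFq. Qed.

Section X2.
Variables (R : realType) (X : Type) (d : X -> X -> R).
Hypothesis Hm : is_metric d.

Lemma openlist (U : set X) (s : list X) :
  (forall z, U z -> exists2 r : R, 0 < r & forall w, setT w -> d z w < r -> U w) ->
  (forall x, List.In x s -> U x) ->
  exists2 r : R, 0 < r & forall x w, List.In x s -> d x w < r -> U w.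
Proof.
move=> HU; elim: s => [|a s IH] Hs; first by exists 1.
have [r1 r10 H1] := HU a (Hs a (or_introl erefl)).
have [r2 r20 H2] := IH (fun x xs => Hs x (or_intror xs)).
exists (Num.min r1 r2); first by rewrite lt_min r10 r20.
move=> x w /= [<-|xs]; rewrite lt_min => /andP[l1 l2].
  exact: H1.
exact: H2 xs l2.
Qed.

Lemma part2 n (f : X -> X) : (1 <= n)%N ->
  sensitive (Fn n) (dH d) (Fn_map f) -> sensitive setT d f.
Proof.
move=> n1 [del del0 H]; exists del => // U [_ HU] [x0 Ux0].
have := H [set A | Fn n A /\ A `<=` U].
case.
- split; first by move=> A [].
  move=> A [FA AU]; case: (FA) => s [sne sl HA].
  have [r r0 Hr] := openlist HU (fun x xs => AU x (proj2 (HA x) xs)).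
  exists r => // W FW lt; split => // w Ww.
  have [a Aa daw] := dH_small2 Hm FA FW Ww lt.
  exact: Hr (proj1 (HA a) Aa) daw.
- exists [set x0]; split; last by move=> ? ->.
  by exists [:: x0]; split => //= y; split => [->|[<-|[]]]; [left|].
move=> A [B [m [[FA AU] [FB BU] m0]]].
rewrite !iterFn => /(H_gt (d0 Hm)).
case.
- by have [a Aa] := Fn_ne FA; exists (iter m f a), a.
- by have [a Aa] := Fn_ne FB; exists (iter m f a), a.
move=> _ [_ [[a Aa <-] [b Bb <-] lt]].
by exists a, b, m; split => //; [apply: AU|apply: BU].
Qed.

End X2.

Section X3.
Variables (R : realType) (X : Type) (d : X -> X -> R).
Hypothesis Hm : is_metric d.

Lemma Fn_set1 n (x : X) : (1 <= n)%N -> Fn n [set x].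
Proof. by move=> n1; exists [:: x]; split => //= y; split => [->|[<-|[]]]; [left|]. Qed.

Lemma Fn1_inv (A : set X) : Fn 1 A -> exists x, forall y, A y <-> y = x.
Proof.
case=> -[|x [|z s]] [] //= _ _ HA; exists x => y; rewrite HA.
by split => [[<-|[]]|->]; [|left].
Qed.

Lemma two_pts n (A : set X) : Fn n A -> ~ Fn 1 A ->
  exists a1 a2, [/\ A a1, A a2 & a1 <> a2].
Proof.
move=> FA NF; apply: contrapT => Hn; apply: NF.
have [a0 Aa0] := Fn_ne FA.
exists [:: a0]; split => //= y; split => [Ay|[<-|[]]] //.
left; apply: contrapT => ne; apply: Hn; by exists a0, y.
Qed.

Lemma isolated x (r : R) : metric_connected d -> 0 < r ->
  (exists y, y <> x /\ d x y < r) \/ (forall y, y = x).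
Proof.
move=> Hc r0; case: (pselect (exists y, y <> x /\ d x y < r)) => [h|h]; [by left|right].
have Hb : forall y, d x y < r -> y = x.
  by move=> y lt; apply: contrapT => ne; apply: h; exists y.
move=> y; apply: contrapT => ne; apply: Hc.
exists [set x], [set y | y <> x]; split.
- rewrite /metric_open; split => // z ->; exists r => // w _ lt; exact: Hb.
- rewrite /metric_open; split => // z nz; exists (d x z).
    rewrite lt_neqAle d0 // andbT; apply/eqP => E; apply: nz.
    by apply/esym/(deq0 Hm).
  by move=> w _ lt E; move: lt; rewrite E dsym // ltxx.
- by exists x.
- by exists y.
- split; first by apply/seteqP; split => z // [->].
  apply/seteqP; split => z // _; case: (pselect (z = x)) => [->|]; [by left|by right].
Qed.

Lemma qU (A C : set X) : (Fn 1 `|` qmap A) C -> Fn 1 C \/ C = A.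
Proof.
case=> [|]; first by left.
case: (pselect (Fn 1 A)) => FA; [rewrite qmapE1 //; by left|rewrite qmapE2 // => ->; by right].
Qed.

Lemma qA (A : set X) : (Fn 1 `|` qmap A) A.
Proof. by case: (pselect (Fn 1 A)) => FA; [rewrite qmapE1 //; left|rewrite qmapE2 //; right]. Qed.

Lemma rho_le (A B : set X) : rho d (qmap A) (qmap B) <= dH d A B.
Proof.
apply: H_le; first exact: dH0.
- exact: dH0.
- move=> C /qU [FC|->].
    exists C; first by left.
    by apply: le_trans (dHself Hm C) (dH0 Hm _ _).
  by exists B => //; apply: qA.
- move=> C /qU [FC|->].
    exists C; first by left.
    by apply: le_trans (dHself Hm C) (dH0 Hm _ _).
  by exists A => //; apply: qA.
Qed.

End X3.

Lemma part3 (R : realType) (X : Type) (d : X -> X -> R) n (f : X -> X) :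
  continuum d -> (2 <= n)%N ->
  sensitive (SFn (X:=X) n) (rho d) (SFn_map f) -> sensitive (Fn n) (dH d) (Fn_map f).
Proof.
case=> Hm _ _ Hc n2 [del del0 H].
have n1 : (1 <= n)%N by apply: leq_trans n2.
have ND : forall x : X, ~ (forall y, y = x).
  move=> x all.
  have FS : forall chi : set (set X), SFn n chi -> chi = Fn 1.
    move=> chi; rewrite /SFn /= => -[//|[A [FA NF _]]]; exfalso; apply: NF.
    have [a0 Aa0] := Fn_ne FA.
    exists [:: x]; split => //= y; split => [_|_]; first by left; rewrite (all y).
    by rewrite (all y) -(all a0).
  have Op : metric_open (rho d) (SFn n) (SFn n).
    by split => // z _; exists 1 => //.
  have [A [B [m [SA SB _ lt]]]] := H _ Op (ex_intro _ (Fn 1) (or_introl erefl)).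
  move: lt; rewrite (FS _ SA) (FS _ SB).
  have -> : forall k, iter k (SFn_map f) (Fn 1) = Fn 1.
    by elim=> //= k ->; rewrite SFE1.
  move=> lt; have le := H_self (dH0 Hm) (Fn 1 `|` Fn 1) (dHself Hm).
  by move: (lt_le_trans lt le); rewrite ltNge (ltW del0).
exists del => // U [Usub HU] [A0 UA0].
have [A [UA NA]] : exists A, U A /\ ~ Fn 1 A.
  case: (pselect (Fn 1 A0)) => F0; last by exists A0.
  have [x Hx] := Fn1_inv F0.
  have [r r0 Hr] := HU A0 UA0.
  case: (isolated Hm x Hc r0) => [[y [yx dxy]]|all]; last by case: (ND x).
  exists [set z | z = x \/ z = y]; split.
  - apply: Hr.
    + exists [:: x; y]; split => //= z.
      split => [[->|->]|[<-|[<-|[]]]]; [by left|by right; left|by left|by right].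
    + apply: le_lt_trans dxy; rewrite /dH.
      apply: (H_le (d0 Hm)) => [|a /Hx ->|b [->|->]]; first exact: d0.
      * by exists x; [left|rewrite (dxx Hm) (d0 Hm)].
      * by exists x; [apply/Hx|rewrite (dxx Hm) (d0 Hm)].
      * by exists x; [apply/Hx|].
  - case/Fn1_inv => z Hz; apply: yx.
    by rewrite (proj1 (Hz x) (or_introl erefl)) (proj1 (Hz y) (or_intror erefl)).
pose V := [set chi | exists B, [/\ U B, ~ Fn 1 B & chi = [set B]]].
have Vopen : metric_open (rho d) (SFn n) V.
  split.
    by move=> _ [B [UB NB ->]]; rewrite /SFn /=; right; exists B; split => //; exact: Usub.
  move=> _ [B [UB NB ->]].
  have FB := Usub B UB.
  have [b1 [b2 [B1 B2 b12]]] := two_pts FB NB.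
  have [rB rB0 HrB] := HU B UB.
  have db : 0 < d b1 b2.
    rewrite lt_neqAle (d0 Hm) andbT; apply/eqP => E; apply: b12.
    by apply: (deq0 Hm); rewrite E.
  exists (Num.min rB (d b1 b2 / 2)); first by rewrite lt_min rB0 divr_gt0.
  move=> psi Spsi lt.
  have lb : inf [set dH d B D | D in Fn 1 `|` psi] <= rho d [set B] psi.
    rewrite /rho; apply: (H_lb1 (M := Num.max 0 (inf [set dH d B D | D in Fn 1 `|` psi]))); last by right.
    move=> C [FC|->]; rewrite le_max; apply/orP; [left|right; exact: lexx].
    apply: le_trans (dHself Hm C); apply: infle.
      by move=> _ [? _ <-]; exact: dH0.
    by exists C => //; left.
  have [D' D'in D'lt] : exists2 D', (Fn 1 `|` psi) D' & dH d B D' < Num.min rB (d b1 b2 / 2).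
    case: (inf_lt _ (le_lt_trans lb lt)).
      by exists (dH d B [set b1]), [set b1] => //; left; exact: Fn_set1.
    by move=> _ [D' ? <-] ?; exists D'.
  have notF1 : forall E, Fn 1 E -> dH d B E < Num.min rB (d b1 b2 / 2) -> False.
    move=> E FE; rewrite lt_min => /andP[_ lt2].
    have [z1 Ez1 d1] := dH_small1 Hm FB FE B1 lt2.
    have [z2 Ez2 d2] := dH_small1 Hm FB FE B2 lt2.
    have [z Hz] := Fn1_inv FE.
    move: d1 d2; rewrite (proj1 (Hz _) Ez1) (proj1 (Hz _) Ez2) => d1 d2.
    have tri := dtri Hm b1 z b2; rewrite (dsym Hm z b2) in tri.
    have h : d b1 z + d b2 z < d b1 b2 / 2 + d b1 b2 / 2 by rewrite ltrD.
    by move: (le_lt_trans tri h); rewrite -splitr ltxx.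
  case: D'in => [FD'|psiD']; first by case: (notF1 _ FD' D'lt).
  move: Spsi; rewrite /SFn /= => -[E|[E [FE NE psiE]]].
    by rewrite E in psiD'; case: (notF1 _ psiD' D'lt).
  subst psi; move: psiD' D'lt => /= ->; rewrite lt_min => /andP[lt1 _].
  by exists E; split => //; apply: HrB.
have V0 : V !=set0 by exists [set A], A.
have [chi1 [chi2 [m [[B1 [UB1 NB1 ->]] [B2 [UB2 NB2 ->]] m0 lt]]]] := H V Vopen V0.
exists B1, B2, m; split => //.
move: lt; rewrite -(qmapE2 NB1) -(qmapE2 NB2) !iterSF => lt.
exact: lt_le_trans lt (rho_le Hm _ _).
Qed.

Theorem theorem1 (R : realType) (X : Type) (d : X -> X -> R) (n : nat) (f : X -> X) :
  continuum d -> (2 <= n)%N -> metric_continuous d f ->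
  (sensitive (SFn (X:=X) n) (rho d) (SFn_map f) -> sensitive (Fn n) (dH d) (Fn_map f)) /\
  (sensitive (Fn n) (dH d) (Fn_map f) -> sensitive setT d f).
Proof.
move=> Hc n2 _; split; first exact: part3.
case: Hc => Hm _ _ _; apply: part2 => //; exact: leq_trans n2.
Qed.
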